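(* Consider the zooming algorithm on an instance of the Lipschitz MAB problem. In a clean phase, for any two distinct strategies $u,v$ that are active at some time $t$ of the phase, $L(u,v)>\tfrac14\min(\Delta(u),\Delta(v))$.
   Context: Lipschitz MAB problem on $(L,X)$ of diameter $\le1$: unknown $\mu:X\to[0,1]$ with $|\mu(x)-\mu(y)|\le L(x,y)$; playing $v$ yields an independent sample in $[0,1]$ of mean $\mu(v)$. $\mu^*=\sup_X\mu$, $\Delta(v)=\mu^*-\mu(v)$. Zooming algorithm: phases $i=1,2,\dots$ of $2^i$ rounds; within phase $i$, $n_t(v)$ = number of plays of $v$ in this phase before round $t$, $\mu_t(v)$ = their average reward ($0$ if none), $r_t(v)=\sqrt{8i/(2+n_t(v))}$, $I_t(v)=\mu_t(v)+2r_t(v)$; at phase start nothing is active; $u$ is covered at $t$ if $u\in B(v,r_t(v))$ (open ball) for some active $v$; in each round, if some strategy is uncovered one such is activated, then an active strategy of maximal index is played. Phase $i$ is clean if $|\mu_t(v)-\mu(v)|\le r_t(v)$ for every strategy $v$ played at least once in the phase and every round $t$ of the phase. *)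

(* Defs.v *)
From Stdlib Require Import Reals Lra Lia ClassicalEpsilon.
Open Scope R_scope.

Set Implicit Arguments.

Definition metric_diam_le1 (X : Type) (L : X -> X -> R) : Prop :=
  (forall x y, 0 <= L x y) /\
  (forall x y, L x y = 0 <-> x = y) /\
  (forall x y, L x y = L y x) /\
  (forall x y z, L x z <= L x y + L y z) /\
  (forall x y, L x y <= 1).

Definition lipschitz_payoff (X : Type) (L : X -> X -> R) (mu : X -> R) : Prop :=
  (forall x, 0 <= mu x <= 1) /\ (forall x y, Rabs (mu x - mu y) <= L x y).

Definition is_sup_mu (X : Type) (mu : X -> R) (mustar : R) : Prop :=
  is_lub (fun r => exists x, r = mu x) mustar.

Definition gapD (X : Type) (mu : X -> R) (mustar : R) (v : X) : R := mustar - mu v.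

(* A run of phase i: rounds are numbered 0 .. 2^i - 1 within the phase.
   act t   = strategy activated in round t (if any),
   play t  = strategy played in round t,
   rew t   = reward observed in round t. *)

Fixpoint nplays (X : Type) (play : nat -> X) (v : X) (t : nat) : nat :=
  match t with
  | O => O
  | S t' => (nplays play v t' +
             if excluded_middle_informative (play t' = v) then 1 else 0)%nat
  end.

Fixpoint sumrew (X : Type) (play : nat -> X) (rew : nat -> R) (v : X) (t : nat) : R :=
  match t with
  | O => 0
  | S t' => sumrew play rew v t' +
            (if excluded_middle_informative (play t' = v) then rew t' else 0)
  end.

Definition muhat (X : Type) (play : nat -> X) (rew : nat -> R) (v : X) (t : nat) : R :=
  match nplays play v t with
  | O => 0
  | n => sumrew play rew v t / INR n
  end.

Definition rad (X : Type) (i : nat) (play : nat -> X) (v : X) (t : nat) : R :=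
  sqrt (8 * INR i / (2 + INR (nplays play v t))).

Definition zindex (X : Type) (i : nat) (play : nat -> X) (rew : nat -> R) (v : X) (t : nat) : R :=
  muhat play rew v t + 2 * rad i play v t.

Definition active_before (X : Type) (act : nat -> option X) (t : nat) (v : X) : Prop :=
  exists s, (s < t)%nat /\ act s = Some v.

Definition active_at (X : Type) (act : nat -> option X) (t : nat) (v : X) : Prop :=
  exists s, (s <= t)%nat /\ act s = Some v.

Definition covered (X : Type) (L : X -> X -> R) (i : nat) (act : nat -> option X)
  (play : nat -> X) (t : nat) (u : X) : Prop :=
  exists v, active_before act t v /\ L u v < rad i play v t.

(* The run (act, play, rew) is a possible execution of phase i of the zooming
   algorithm (with arbitrary choices of the activated uncovered strategy and
   arbitrary tie-breaking), with rewards in [0,1]. *)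
Definition zooming_phase_run (X : Type) (L : X -> X -> R) (i : nat)
  (act : nat -> option X) (play : nat -> X) (rew : nat -> R) : Prop :=
  forall t, (t < 2 ^ i)%nat ->
    (match act t with
     | Some w => ~ covered L i act play t w
     | None => forall u, covered L i act play t u
     end) /\
    active_at act t (play t) /\
    (forall w, active_at act t w -> zindex i play rew w t <= zindex i play rew (play t) t) /\
    0 <= rew t <= 1.

Definition clean_phase (X : Type) (mu : X -> R) (i : nat)
  (play : nat -> X) (rew : nat -> R) : Prop :=
  forall v, (exists s, (s < 2 ^ i)%nat /\ play s = v) ->
  forall t, (t < 2 ^ i)%nat ->
    Rabs (muhat play rew v t - mu v) <= rad i play v t.

(* Main.v *)
Require Import Defs.
From Stdlib Require Import Reals Lra Lia Classical ClassicalEpsilon.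
Open Scope R_scope.

Lemma rad_pos {X : Type} i (play : nat -> X) v t : (1 <= i)%nat -> 0 < rad i play v t.
Proof.
  intros Hi. unfold rad. apply sqrt_lt_R0.
  assert (1 <= INR i) by (apply (le_INR 1); lia).
  assert (0 <= INR (nplays play v t)) by apply pos_INR.
  apply Rdiv_lt_0_compat; lra.
Qed.

Lemma rad_zero {X : Type} i (play : nat -> X) v t : (1 <= i)%nat ->
  nplays play v t = O -> 2 <= rad i play v t.
Proof.
  intros Hi H. unfold rad. rewrite H. simpl INR.
  assert (1 <= INR i) by (apply (le_INR 1); lia).
  replace (8 * INR i / (2 + 0)) with (4 * INR i) by field.
  rewrite <- (sqrt_square 2) by lra. apply sqrt_le_1_alt. lra.
Qed.

Lemma last_play {X : Type} (play : nat -> X) v t :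
  (0 < nplays play v t)%nat ->
  exists s, (s < t)%nat /\ play s = v /\ nplays play v (S s) = nplays play v t.
Proof.
  induction t as [|t IH]; intros H; [simpl in H; lia|].
  simpl in H.
  destruct (excluded_middle_informative (play t = v)) as [E|E].
  - exists t. split; [lia|]. split; [exact E|]. reflexivity.
  - rewrite Nat.add_0_r in *. destruct (IH H) as [s [H1 [H2 H3]]].
    exists s. split; [lia|]. split; [exact H2|]. rewrite H3. simpl.
    destruct (excluded_middle_informative (play t = v)); [contradiction|lia].
Qed.

Lemma abs_lower a b : Rabs a <= b -> - b <= a.
Proof.
  intros H. pose proof (Rle_abs (- a)). rewrite Rabs_Ropp in H0. lra.
Qed.

Lemma zindex_lb {X : Type} (L : X -> X -> R) (mu : X -> R) i
  (act : nat -> option X) (play : nat -> X) (rew : nat -> R)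
  (Hmu : lipschitz_payoff L mu) (Hi : (1 <= i)%nat)
  (Hclean : clean_phase mu i play rew) w s : (s < 2 ^ i)%nat ->
  mu w + rad i play w s <= zindex i play rew w s.
Proof.
  intros Hs. unfold zindex.
  destruct (Nat.eq_dec (nplays play w s) 0) as [E|E].
  - pose proof (rad_zero i play w s Hi E). unfold muhat. rewrite E.
    destruct Hmu as [Hm _]. specialize (Hm w). lra.
  - destruct (last_play play w s ltac:(lia)) as [s' [H1 [H2 _]]].
    assert (Hs' : (s' < 2 ^ i)%nat) by lia.
    assert (Hc := Hclean w (ex_intro _ s' (conj Hs' H2)) s Hs).
    apply abs_lower in Hc. lra.
Qed.

Lemma gap_bound {X : Type} (L : X -> X -> R) (mu : X -> R) (mustar : R)
  (HL : metric_diam_le1 L) (Hmu : lipschitz_payoff L mu) (Hsup : is_sup_mu mu mustar)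
  (i : nat) (Hi : (1 <= i)%nat)
  (act : nat -> option X) (play : nat -> X) (rew : nat -> R)
  (Hrun : zooming_phase_run L i act play rew)
  (Hclean : clean_phase mu i play rew) s :
  (s < 2 ^ i)%nat -> mustar - mu (play s) <= 3 * rad i play (play s) s.
Proof.
  intros Hs. set (v := play s).
  assert (Hub : mustar <= zindex i play rew v s).
  { destruct Hsup as [_ Hl]. apply Hl. intros r [x ->].
    destruct (Hrun s Hs) as [Hact [_ [Hmax _]]].
    assert (Hcov : covered L i act play s x -> mu x <= zindex i play rew v s).
    { intros [w2 [Hw2 Hd]].
      assert (Ha : active_at act s w2).
      { destruct Hw2 as [s0 [? ?]]. exists s0. split; [lia|assumption]. }
      pose proof (Hmax w2 Ha).
      pose proof (zindex_lb L mu i act play rew Hmu Hi Hclean w2 s Hs).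
      destruct Hmu as [_ Hlip]. specialize (Hlip x w2).
      pose proof (Rle_abs (mu x - mu w2)). fold v in H. lra. }
    destruct (act s) as [w|] eqn:Ea.
    - destruct (classic (covered L i act play s x)) as [C|C]; [auto|].
      assert (E0 : nplays play w s = O).
      { destruct (Nat.eq_dec (nplays play w s) 0) as [E|E]; [exact E|].
        exfalso. destruct (last_play play w s ltac:(lia)) as [s' [H1 [H2 _]]].
        apply Hact. exists w. split.
        - destruct (Hrun s' ltac:(lia)) as [_ [[s0 [Hs0 Hs0']] _]].
          exists s0. rewrite H2 in Hs0'. split; [lia|exact Hs0'].
        - destruct HL as [_ [Hz _]]. rewrite (proj2 (Hz w w) eq_refl).
          apply rad_pos; exact Hi. }
      pose proof (rad_zero i play w s Hi E0).
      pose proof (zindex_lb L mu i act play rew Hmu Hi Hclean w s Hs).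
      assert (Ha : active_at act s w) by (exists s; split; [lia|exact Ea]).
      pose proof (Hmax w Ha). destruct Hmu as [Hm _].
      pose proof (Hm x). pose proof (Hm w). fold v in H1. lra.
    - apply Hcov. apply Hact. }
  assert (Hc := Hclean v (ex_intro _ s (conj Hs eq_refl)) s Hs).
  pose proof (Rle_abs (muhat play rew v s - mu v)).
  unfold zindex in Hub. fold v. lra.
Qed.

Lemma rad_step {X : Type} i (play : nat -> X) s : (1 <= i)%nat ->
  3 * rad i play (play s) s < 4 * rad i play (play s) (S s).
Proof.
  intros Hi. unfold rad. simpl nplays.
  destruct (excluded_middle_informative (play s = play s)) as [_|C]; [|congruence].
  rewrite plus_INR. simpl INR.
  set (N := INR (nplays play (play s) s)).
  assert (0 <= N) by apply pos_INR.
  assert (1 <= INR i) by (apply (le_INR 1); lia).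
  rewrite <- (sqrt_square 3) at 1 by lra.
  rewrite <- (sqrt_square 4) by lra.
  rewrite <- !sqrt_mult_alt by nra.
  apply sqrt_lt_1_alt. split.
  - apply Rmult_le_pos; [lra|]. apply Rlt_le, Rdiv_lt_0_compat; lra.
  - cut (0 < 4 * 4 * (8 * INR i / (2 + (N + 1))) - 3 * 3 * (8 * INR i / (2 + N))).
    { lra. }
    replace (4 * 4 * (8 * INR i / (2 + (N + 1))) - 3 * 3 * (8 * INR i / (2 + N)))
      with (8 * INR i * (5 + 7 * N) / ((2 + N) * (3 + N))) by (field; lra).
    apply Rdiv_lt_0_compat; nra.
Qed.

Lemma core {X : Type} (L : X -> X -> R) (mu : X -> R) (mustar : R)
  (HL : metric_diam_le1 L) (Hmu : lipschitz_payoff L mu) (Hsup : is_sup_mu mu mustar)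
  (i : nat) (Hi : (1 <= i)%nat)
  (act : nat -> option X) (play : nat -> X) (rew : nat -> R)
  (Hrun : zooming_phase_run L i act play rew)
  (Hclean : clean_phase mu i play rew) u v su sv :
  (su < 2 ^ i)%nat -> (sv < su)%nat -> act su = Some u -> act sv = Some v ->
  L u v > / 4 * gapD mu mustar v.
Proof.
  intros Hsu Hlt Hu Hv.
  destruct (Hrun su Hsu) as [Hact _]. rewrite Hu in Hact.
  assert (Hge : rad i play v su <= L u v).
  { apply Rnot_lt_le. intros C. apply Hact. exists v. split; [|exact C].
    exists sv. split; assumption. }
  destruct (Nat.eq_dec (nplays play v su) 0) as [E|E].
  - pose proof (rad_zero i play v su Hi E).
    destruct HL as [_ [_ [_ [_ Hd]]]]. specialize (Hd u v). lra.
  - destruct (last_play play v su ltac:(lia)) as [s' [H1 [H2 H3]]].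
    pose proof (gap_bound L mu mustar HL Hmu Hsup i Hi act play rew Hrun Hclean s' ltac:(lia)).
    pose proof (rad_step i play s' Hi).
    rewrite H2 in H, H0.
    assert (rad i play v (S s') = rad i play v su) by (unfold rad; rewrite H3; reflexivity).
    unfold gapD. lra.
Qed.

Theorem mainTheorem10 (X : Type) (L : X -> X -> R) (mu : X -> R) (mustar : R)
  (HL : metric_diam_le1 L) (Hmu : lipschitz_payoff L mu) (Hsup : is_sup_mu mu mustar)
  (i : nat) (Hi : (1 <= i)%nat)
  (act : nat -> option X) (play : nat -> X) (rew : nat -> R)
  (Hrun : zooming_phase_run L i act play rew)
  (Hclean : clean_phase mu i play rew) :
  forall (t : nat) (u v : X), (t < 2 ^ i)%nat ->
    active_at act t u -> active_at act t v -> u <> v ->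
    L u v > / 4 * Rmin (gapD mu mustar u) (gapD mu mustar v).
Proof.
  intros t u v Ht [su [Hsu Hu]] [sv [Hsv Hv]] Huv.
  destruct (Nat.lt_total sv su) as [Hl|[He|Hl]].
  - pose proof (core L mu mustar HL Hmu Hsup i Hi act play rew Hrun Hclean u v su sv
      ltac:(lia) Hl Hu Hv).
    pose proof (Rmin_r (gapD mu mustar u) (gapD mu mustar v)). lra.
  - subst. rewrite Hu in Hv. inversion Hv. contradiction.
  - pose proof (core L mu mustar HL Hmu Hsup i Hi act play rew Hrun Hclean v u sv su
      ltac:(lia) Hl Hv Hu).
    pose proof (Rmin_l (gapD mu mustar u) (gapD mu mustar v)).
    destruct HL as [_ [_ [Hs _]]]. rewrite (Hs u v). lra.
Qed.
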